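(* Let $X_0,X_1,\dots,X_q$ be sets with $X_q=A$, let $\mathcal H_i$ be a family of maps $X_{i-1}\to X_i$ ($1\le i\le q$), let $l\colon Y\times A\to[0,M]$, and set $\mathcal H=\mathcal H_q\circ\dots\circ\mathcal H_1$ and $\mathcal G_i=\mathcal H_q\circ\dots\circ\mathcal H_{i+1}$ for $1\le i\le q-1$. For all $\varepsilon_1,\dots,\varepsilon_q>0$, with $\varepsilon=\sum_{i=1}^q\varepsilon_i$, $$\mathcal C(\varepsilon,l_{\mathcal H})\le\mathcal C(\varepsilon_q,l_{\mathcal H_q})\prod_{i=1}^{q-1}\mathcal C_{l_{\mathcal G_i}}(\varepsilon_i,\mathcal H_i).$$
   Context: For a map $h\colon W\to A$, $l_h\colon W\times Y\to[0,M]$ is $l_h(w,y)=l(y,h(w))$, and $l_{\mathcal K}=\{l_k:k\in\mathcal K\}$; so $l_{\mathcal H}$ consists of functions on $X_0\times Y$ and $l_{\mathcal H_q}$ of functions on $X_{q-1}\times Y$. For a class $\mathcal K$ of functions from a set $W$ into $[0,M]$: $\sigma_{\mathcal K}$ the $\sigma$-algebra generated by inverse images of open balls, $\mathcal P_{\mathcal K}$ the probability measures on it, $d_P(k,k')=\int|k-k'|dP$, $\mathcal N(\varepsilon,S,\rho)$ minimal size of an $\varepsilon$-cover, $\mathcal C(\varepsilon,\mathcal K)=\sup_{P\in\mathcal P_{\mathcal K}}\mathcal N(\varepsilon,\mathcal K,d_P)$ ($\infty$ if unbounded). For a structure $U\xrightarrow{\mathcal F}V\xrightarrow{\mathcal G}A$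 and $P\in\mathcal P_{l_{\mathcal G\circ\mathcal F}}$ (measures on $U\times Y$), $d_{[P,l_{\mathcal G}]}(f,f')=\sup_{g\in\mathcal G}\int|l_{g\circ f}-l_{g\circ f'}|\,dP$ and $\mathcal C_{l_{\mathcal G}}(\varepsilon,\mathcal F)=\sup_{P\in\mathcal P_{l_{\mathcal G\circ\mathcal F}}}\mathcal N(\varepsilon,\mathcal F,d_{[P,l_{\mathcal G}]})$; here applied with $U=X_{i-1}$, $V=X_i$, $\mathcal F=\mathcal H_i$, $\mathcal G=\mathcal G_i$. *)

(* Defs.v *)
From HB Require Import structures.
From mathcomp Require Import all_boot all_order all_algebra.
From mathcomp Require Import all_classical all_reals all_analysis.
From Stdlib Require Lists.List.
Set Implicit Arguments. Unset Strict Implicit. Unset Printing Implicit Defensive.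
Import Order.TTheory GRing.Theory Num.Theory.
Import numFieldNormedType.Exports.
Local Open Scope classical_set_scope.
Local Open Scope ring_scope.

(* A type T made pointed by a chosen element p (the point plays no role:
   it is only needed because MathComp-Analysis measurable types are pointed). *)
Definition ptd {T : Type} (p : T) : Type := T.
HB.instance Definition _ (T : Type) (p : T) := gen_eqMixin (ptd p).
HB.instance Definition _ (T : Type) (p : T) := gen_choiceMixin (ptd p).
HB.instance Definition _ (T : Type) (p : T) := isPointed.Build (ptd p) p.

Section Defs.
Variable R : realType.

Definition lossf {W A Y : Type} (l : Y -> A -> R) (h : W -> A) : W * Y -> R :=
  fun wy => l wy.2 (h wy.1).

Definition lossc {W A Y : Type} (l : Y -> A -> R) (K : set (W -> A))
  : set (W * Y -> R) := [set lossf l h | h in K].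

Definition compc {U V A : Type} (G : set (V -> A)) (F : set (U -> V))
  : set (U -> A) := [set h | exists g f, G g /\ F f /\ h = g \o f].

Definition sigma_gen {W : Type} (K : set (W -> R)) : set (set W) :=
  [set B | exists k (c r : R), K k /\ B = k @^-1` ball c r].

Definition sigK {W : Type} (p : W) (K : set (W -> R)) :=
  g_sigma_algebraType (@sigma_gen (ptd p) K).

Definition dP {W : Type} (p : W) (K : set (W -> R))
  (P : probability (sigK p K) R) (k k' : W -> R) : \bar R :=
  (\int[P]_(x in [set: sigK p K]) (`|k x - k' x|)%:E)%E.

(* N(eps, S, rho): minimal size of an eps-cover of S (cover points taken in S,
   closed balls rho(s,t) <= eps); +oo if no finite cover exists. *)
Definition cover_num {T : Type} (eps : R) (S : set T) (rho : T -> T -> \bar R)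
  : \bar R :=
  ereal_inf [set (size C)%:R%:E | C in
    [set C : seq T | (forall t, List.In t C -> S t) /\
        (forall s, S s -> exists t, List.In t C /\ (rho s t <= eps%:E)%E)]].

(* C(eps, K) = sup_{P in P_K} N(eps, K, d_P)  (a sup of nonnegative quantities;
   sup of the empty family, when W is empty, taken to be 0). *)
Definition capC {W : Type} (eps : R) (K : set (W -> R)) : \bar R :=
  ereal_sup ([set x | exists (p : W) (P : probability (sigK p K) R),
                 x = cover_num eps K (@dP W p K P)] `|` [set 0%E]).

Definition dPG {U V A Y : Type} (l : Y -> A -> R) (G : set (V -> A))
  (F : set (U -> V)) (p : U * Y)
  (P : probability (sigK p (lossc l (compc G F))) R) (f f' : U -> V) : \bar R :=
  ereal_sup [set dP P (lossf l (g \o f)) (lossf l (g \o f')) | g in G].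

Definition capCG {U V A Y : Type} (l : Y -> A -> R) (G : set (V -> A))
  (eps : R) (F : set (U -> V)) : \bar R :=
  ereal_sup ([set x | exists (p : U * Y)
                 (P : probability (sigK p (lossc l (compc G F))) R),
                 x = cover_num eps F (dPG P)] `|` [set 0%E]).

End Defs.

(* comp_to X H q i f  <->  f is in  H_(q-1) o ... o H_i  (maps X i -> X q);
   comp_to X H q q = {id}.  Here H i is a family of maps X i -> X (i+1). *)
Inductive comp_to (X : nat -> Type) (H : forall i, set (X i -> X i.+1)) (q : nat)
  : forall i : nat, (X i -> X q) -> Prop :=
| comp_to_id : @comp_to X H q q (fun x => x)
| comp_to_step i (h : X i -> X i.+1) (g : X i.+1 -> X q) :
    H i h -> @comp_to X H q i.+1 g -> @comp_to X H q i (g \o h).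

(* Main.v *)
Require Import Defs.
From HB Require Import structures.
From mathcomp Require Import all_boot all_order all_algebra.
From mathcomp Require Import all_classical all_reals all_analysis.
From mathcomp Require Import ring lra.
From mathcomp Require Import measurable_realfun lebesgue_measure lebesgue_integral.
Import numFieldNormedType.Exports.
Import Order.TTheory GRing.Theory Num.Theory.
Local Open Scope classical_set_scope.
Local Open Scope ring_scope.
Set Implicit Arguments. Unset Strict Implicit. Unset Printing Implicit Defensive.
Local Open Scope classical_set_scope.
Local Open Scope ring_scope.

Lemma mK (R : realType) (W : Type) (p : W) (K : set (W -> R)) (k : W -> R) :
  K k -> measurable_fun [set: sigK p K] (k : sigK p K -> R).
Proof.
move=> Kk.
apply: (@measurability _ _ _ _ _ _ (@measurable_realfun.RGenOpens.G R)).
  exact: measurable_realfun.RGenOpens.measurableE.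
move=> _ [B [x [y ->]] <-].
rewrite setTI.
have -> : `]x, y[%classic = ball ((x + y) / 2 : R) ((y - x) / 2) :> set R.
  have e1 : (x + y) / 2 - (y - x) / 2 = x by field.
  have e2 : (x + y) / 2 + (y - x) / 2 = y by field.
  by rewrite ball_itv e1 e2.
apply: sub_sigma_algebra.
by exists k, ((x + y) / 2), ((y - x) / 2).
Qed.

Lemma mabs (R : realType) (W : Type) (p : W) (K : set (W -> R)) (k k' : W -> R) :
  K k -> K k' -> measurable_fun [set: sigK p K]
     (fun x : sigK p K => @EFin R `|k x - k' x|).
Proof.
move=> Kk Kk'.
apply/measurable_EFinP.
apply: measurableT_comp => //.
apply: measurable_funB; exact: mK.
Qed.

Lemma dP_tri (R : realType) (W : Type) (p : W) (K : set (W -> R))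
  (P : probability (sigK p K) R) (k1 k2 k3 : W -> R) :
  K k1 -> K k2 -> K k3 ->
  (dP P k1 k3 <= dP P k1 k2 + dP P k2 k3)%E.
Proof.
move=> K1 K2 K3.
rewrite /dP -ge0_integralD //.
all: try (by move=> x _; rewrite lee_fin).
all: try exact: mabs.
apply: ge0_le_integral => //.
- exact: mabs.
- by apply: emeasurable_funD; exact: mabs.
move=> x _; rewrite -EFinD lee_fin.
exact: (ler_distD (k2 x)).
Qed.

Definition phi (U V Y : Type) (f : U -> V) : U * Y -> V * Y := fun x => (f x.1, x.2).

Lemma phi_meas (R : realType) (U V A Y : Type) (l : Y -> A -> R)
  (F : set (U -> V)) (G : set (V -> A)) (pt : U * Y) (f : U -> V) :
  F f ->
  measurable_fun [set: sigK pt (lossc l (compc G F))]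
    (@phi U V Y f : sigK pt (lossc l (compc G F)) -> sigK (f pt.1, pt.2) (lossc l G)).
Proof.
move=> Ff.
have := (@measurability _ _ _ _ setT (@phi U V Y f : sigK pt (lossc l (compc G F)) -> sigK (f pt.1, pt.2) (lossc l G)) (@sigma_gen R (ptd (f pt.1, pt.2)) (lossc l G))).
move=> h; apply: h => //.
move=> _ [B [k [c [r [[g Gg <-] ->]]]] <-].
rewrite setTI.
apply: sub_sigma_algebra.
exists (lossf l (g \o f)), c, r; split => //.
exists (g \o f) => //.
by exists g, f.
Qed.

Definition phim (R : realType) (U V A Y : Type) (l : Y -> A -> R)
  (F : set (U -> V)) (G : set (V -> A)) (pt : U * Y) (f : U -> V) (Ff : F f) :
  {mfun sigK pt (lossc l (compc G F)) >-> sigK (f pt.1, pt.2) (lossc l G)} :=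
  HB.pack (@phi U V Y f : sigK pt (lossc l (compc G F)) -> sigK (f pt.1, pt.2) (lossc l G))
    (isMeasurableFun.Build _ _ _ _ _ (@phi_meas R U V A Y l F G pt f Ff)).

Definition Qf (R : realType) (U V A Y : Type) (l : Y -> A -> R)
  (F : set (U -> V)) (G : set (V -> A)) (pt : U * Y)
  (P : probability (sigK pt (lossc l (compc G F))) R) (f : U -> V) (Ff : F f) :
  probability (sigK (f pt.1, pt.2) (lossc l G)) R :=
  distribution P (@phim R U V A Y l F G pt f Ff).

Lemma dP_push (R : realType) (U V A Y : Type) (l : Y -> A -> R)
  (F : set (U -> V)) (G : set (V -> A)) (pt : U * Y)
  (P : probability (sigK pt (lossc l (compc G F))) R) (f : U -> V) (Ff : F f)
  (g g' : V -> A) : G g -> G g' ->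
  dP (@Qf R U V A Y l F G pt P f Ff) (lossf l g) (lossf l g') = dP P (lossf l (g \o f)) (lossf l (g' \o f)).
Proof.
move=> Gg Gg'.
rewrite /dP /Qf /distribution ge0_integral_pushforward //.
apply: mabs; by [exists g|exists g'].
Qed.

Lemma cover_ge1 (R : realType) (T : Type) (eps : R) (S : set T) (rho : T -> T -> \bar R) :
  (exists s, S s) -> (1 <= cover_num eps S rho)%E.
Proof.
move=> [s Ss]; apply: le_ereal_inf_tmp => _ [C [_ hC] <-].
have [t [Ht _]] := hC s Ss.
rewrite lee_fin; case: C Ht {hC} => // a C _.
by rewrite ler1n.
Qed.

Lemma cover_min (R : realType) (T : Type) (eps : R) (S : set T) (rho : T -> T -> \bar R) :
  (cover_num eps S rho < +oo)%E ->
  exists C : seq T, ((forall t, List.In t C -> S t) /\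
        (forall s, S s -> exists t, List.In t C /\ (rho s t <= eps%:E)%E)) /\
     ((size C)%:R%:E <= cover_num eps S rho)%E.
Proof.
move=> hlt.
pose iscov (C : seq T) := (forall t, List.In t C -> S t) /\
        (forall s, S s -> exists t, List.In t C /\ (rho s t <= eps%:E)%E).
have [C0 H0] : exists C, iscov C.
  apply: contrapT => hn; move: hlt; rewrite /cover_num.
  have -> : [set (size C)%:R%:E | C in [set C : seq T | iscov C]] = set0 :> set (\bar R).
    apply/seteqP; split => // t [C hC _]; exfalso; apply: hn; by exists C.
  by rewrite ereal_inf0 ltxx.
have key : forall n C, iscov C -> (size C <= n)%N ->
    exists C', iscov C' /\ forall C'', iscov C'' -> (size C' <= size C'')%N.
  elim=> [|n IH] C hC hs.
    by exists C; split => // C'' _; rewrite (leq_trans hs).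
  have [[C'' [hC'' hlt']]|hno] := pselect (exists C'', iscov C'' /\ (size C'' < size C)%N).
    by apply: (IH C'') => //; rewrite -ltnS (leq_trans hlt').
  exists C; split => // C'' hC''; rewrite leqNgt; apply/negP => hlt'.
  by apply: hno; exists C''.
have [C [hC hmin]] := key _ C0 H0 (leqnn _).
exists C; split => //.
apply: le_ereal_inf_tmp => _ [C'' hC'' <-].
by rewrite lee_fin ler_nat; exact: hmin.
Qed.

Lemma lift_list (S T : Type) (Pr : S -> Prop) (f : S -> T) (C : seq T) :
  (forall t, List.In t C -> exists2 s, Pr s & f s = t) ->
  exists Cs : seq S, map f Cs = C /\ (forall s, List.In s Cs -> Pr s).
Proof.
elim: C => [|t C IH] h; first by exists [::].
have [s Ps fs] := h t (or_introl erefl).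
have [Cs [e hCs]] := IH (fun t' ht' => h t' (or_intror ht')).
exists (s :: Cs); split; first by rewrite /= fs e.
by move=> s' [<-|/hCs].
Qed.

Lemma build_D (R : realType) (T' A' : Type) (k : R) (C1 : seq A') (Good : A' -> seq T' -> Prop) :
 (forall a, List.In a C1 -> exists L, Good a L /\ (size L)%:R <= k) ->
 exists D : seq T', ((size D)%:R <= (size C1)%:R * k) /\
   (forall t, List.In t D -> exists a L, List.In a C1 /\ Good a L /\ List.In t L) /\
   (forall a, List.In a C1 -> exists L, Good a L /\ forall t, List.In t L -> List.In t D).
Proof.
elim: C1 => [|a C1 IH] h.
  by exists [::]; rewrite mul0r; split.
have [L [GL sL]] := h a (or_introl erefl).
have [D [sD [hD1 hD2]]] := IH (fun a' ha' => h a' (or_intror ha')).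
exists (L ++ D); split; [|split].
- rewrite size_cat natrD /= -addn1 natrD mulrDl mul1r.
  move: sL sD; set x := (size L)%:R; set y := (size D)%:R; set z := (size C1)%:R.
  move=> sL sD; lra.
- move=> t /List.in_app_iff [tL|tD].
    by exists a, L; split; [left|split].
  have [a' [L' [Ia [G' It]]]] := hD1 t tD.
  by exists a', L'; split; [right|split].
- move=> a' [<-|Ia].
    by exists L; split => // t tL; apply/List.in_app_iff; left.
  have [L' [G' hL']] := hD2 a' Ia.
  by exists L'; split => // t tL; apply/List.in_app_iff; right; apply: hL'.
Qed.

Lemma core (R : realType) (U V A Y : Type) (l : Y -> A -> R) (F : set (U -> V))
  (G : set (V -> A)) (pt : U * Y)
  (P : probability (sigK pt (lossc l (compc G F))) R) (e1 e2 : R) :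
  (cover_num (e1 + e2) (lossc l (compc G F)) (@dP R (U * Y) pt (lossc l (compc G F)) P)
    <= capCG l G e1 F * capC e2 (lossc l G))%E.
Proof.
set N1 := cover_num e1 F (dPG P).
have hN1 : (N1 <= capCG l G e1 F)%E.
  by apply: ereal_sup_ubound; left; exists pt, P.
have CG0 : (0 <= capCG l G e1 F)%E by apply: ereal_sup_ubound; right.
have C0 : (0 <= capC e2 (lossc l G))%E by apply: ereal_sup_ubound; right.
have [[[f0 Ff0] [g0 Gg0]] | nFG] :=
  pselect ((exists f, F f) /\ (exists g, G g)); last first.
  apply: le_trans (mule_ge0 CG0 C0).
  apply: ereal_inf_lbound; exists [::] => //; split => // s [h [g [f [Gg [Ff _]]]] _].
  by exfalso; apply: nFG; split; [exists f|exists g].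
have hQ : forall f (Ff : F f),
    (cover_num e2 (lossc l G) (dP (@Qf R U V A Y l F G pt P f Ff)) <= capC e2 (lossc l G))%E.
  move=> f Ff; apply: ereal_sup_ubound; left.
  by exists (f pt.1, pt.2), (@Qf R U V A Y l F G pt P f Ff).
have K1 : (1 <= capC e2 (lossc l G))%E.
  apply: le_trans (hQ f0 Ff0); apply: cover_ge1.
  by exists (lossf l g0), g0.
have N11 : (1 <= N1)%E by apply: cover_ge1; exists f0.
have [CGlt|CGge] := boolP (capCG l G e1 F < +oo)%E; last first.
  move: CGge; rewrite ltey negbK => /eqP ->.
  by rewrite gt0_mulye ?leey // (lt_le_trans _ K1) // lte01.
have [Klt|Kge] := boolP (capC e2 (lossc l G) < +oo)%E; last first.
  move: Kge; rewrite ltey negbK => /eqP ->.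
  by rewrite gt0_muley ?leey // (lt_le_trans _ (le_trans N11 hN1)) // lte01.
have [C1 [[C1F C1cov] sC1]] := cover_min (le_lt_trans hN1 CGlt).
have kfin : capC e2 (lossc l G) \is a fin_num by rewrite ge0_fin_numE.
set k := fine (capC e2 (lossc l G)).
have kE : capC e2 (lossc l G) = k%:E by rewrite fineK.
pose Good (f : U -> V) (L : seq (U * Y -> R)) :=
  (forall t, List.In t L -> exists g', G g' /\ t = lossf l (g' \o f)) /\
  (forall g, G g -> exists t, List.In t L /\ (dP P (lossf l (g \o f)) t <= e2%:E)%E).
have hGood : forall f, List.In f C1 -> exists L, Good f L /\ (size L)%:R <= k.
  move=> f If; have Ff := C1F f If.
  have [C2 [[C2G C2cov] sC2]] := cover_min (le_lt_trans (hQ f Ff) Klt).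
  have [Cg [eCg hCg]] := lift_list C2G.
  exists (map (fun g' => lossf l (g' \o f)) Cg); split; [split|].
  - move=> t /List.in_map_iff [g' [<- /hCg Gg']]; by exists g'.
  - move=> g Gg.
    have [t2 [It2 dt2]] := C2cov (lossf l g) (ex_intro2 _ _ g Gg erefl).
    rewrite -eCg in It2; move/List.in_map_iff: It2 => [g' [eg' Ig']]; subst t2.
    exists (lossf l (g' \o f)); split.
      by apply/List.in_map_iff; exists g'.
    by rewrite -(@dP_push R U V A Y l F G pt P f Ff) //; exact: hCg.
  - rewrite size_map -lee_fin -kE -(size_map (lossf l)) eCg.
    exact: le_trans sC2 (hQ f Ff).
have [D [sD [hD1 hD2]]] := build_D hGood.
apply: (@le_trans _ _ ((size D)%:R%:E)).
  apply: ereal_inf_lbound; exists D => //; split.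
  - move=> t /hD1 [f [L [If [[GL _] It]]]].
    have [g' [Gg' ->]] := GL t It.
    exists (g' \o f) => //; exists g', f; split => //; split => //; exact: C1F.
  - move=> s [h [g [f0' [Gg [Ff0' ->]]]] <-].
    have [f [If df]] := C1cov f0' Ff0'.
    have [L [[GL GL2] LD]] := hD2 f If.
    have [t [It dt]] := GL2 g Gg.
    exists t; split; first exact: LD.
    have [g' [Gg' et]] := GL t It.
    have Ff := C1F f If.
    apply: le_trans (@dP_tri R (U * Y) pt (lossc l (compc G F)) P _ (lossf l (g \o f)) _ _ _ _) _.
    + by exists (g \o f0') => //; exists g, f0'.
    + by exists (g \o f) => //; exists g, f.
    + by rewrite et; exists (g' \o f) => //; exists g', f.
    rewrite EFinD; apply: leeD => //.
    apply: le_trans df.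
    by apply: ereal_sup_ubound; exists g.
rewrite kE; apply: (@le_trans _ _ ((size C1)%:R%:E * k%:E)%E).
  by rewrite -EFinM lee_fin.
apply: lee_wpmul2r; first by rewrite -kE.
exact: le_trans sC1 hN1.
Qed.

Lemma two_layer (R : realType) (U V A Y : Type) (l : Y -> A -> R) (F : set (U -> V))
  (G : set (V -> A)) (e1 e2 : R) :
  (capC (e1 + e2) (lossc l (compc G F)) <= capCG l G e1 F * capC e2 (lossc l G))%E.
Proof.
apply: ge_ereal_sup => x [[pt [P ->]] | ->].
  exact: core.
by apply: mule_ge0; apply: ereal_sup_ubound; right.
Qed.

Lemma comp_to_le (X : nat -> Type) (H : forall i, set (X i -> X i.+1)) q i g :
  @comp_to X H q i g -> (i <= q)%N.
Proof. by elim=> // j h g' _ _ /ltnW. Qed.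

Lemma comp_to_dec (X : nat -> Type) (H : forall i, set (X i -> X i.+1)) q i :
  (i < q)%N -> @comp_to X H q i = compc (@comp_to X H q i.+1) (H i).
Proof.
move=> iq; apply/funext => g; apply/propext; split.
  move=> c; move: c iq; case=> [|j h g' Hh Hg] iq; first by rewrite ltnn in iq.
  by exists g', h.
by move=> [g' [h [Hg' [Hh ->]]]]; apply: comp_to_step.
Qed.

Lemma comp_to_qq (X : nat -> Type) (H : forall i, set (X i -> X i.+1)) q j
  (g : X j -> X q) : @comp_to X H q j g -> forall e : j = q,
  eq_rect j (fun t => X t -> X q) g q e = id.
Proof.
case=> [|j' h g' Hh Hg] e.
  by rewrite (eq_irrelevance e erefl).
exfalso; move: (comp_to_le Hg); by rewrite e ltnn.
Qed.

Lemma comp_to_base (X : nat -> Type) (H : forall i, set (X i -> X i.+1)) :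
  @comp_to X H 1 0 = H 0.
Proof.
rewrite comp_to_dec //; apply/funext => g; apply/propext; split.
  move=> [g' [h [Hg' [Hh ->]]]].
  by have := comp_to_qq Hg' erefl => /= ->.
move=> Hg; exists id, g; split; [exact: comp_to_id | by split].
Qed.

Lemma comp_to_shift (X : nat -> Type) (H : forall i, set (X i -> X i.+1)) q i :
  @comp_to X H q.+1 i.+1 = @comp_to (fun n => X n.+1) (fun n => H n.+1) q i :> set _.
Proof.
apply/funext => g; apply/propext; split.
  have gen : forall j (g : X j -> X q.+1), @comp_to X H q.+1 j g ->
      match j return (X j -> X q.+1) -> Prop with
      | 0 => fun _ => True
      | j'.+1 => fun g => @comp_to (fun n => X n.+1) (fun n => H n.+1) q j' g
      end g.
    move=> j g0; elim=> [|j1 h g1 Hh Hg IH] /=.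
      exact: (@comp_to_id (fun n => X n.+1) (fun n => H n.+1) q).
    case: j1 h g1 Hh Hg IH => // j1 h g1 Hh Hg IH.
    exact: (@comp_to_step (fun n => X n.+1) (fun n => H n.+1) q j1 h g1 Hh IH).
  exact: gen.
elim=> [|j h g1 Hh Hg IH]; first exact: comp_to_id.
exact: (@comp_to_step X H q.+1 j.+1 h g1 Hh IH).
Qed.

Unset Implicit Arguments.

Theorem lemmaC12 (R : realType) (X : nat -> Type) (Y : Type) (p : nat)
  (H : forall i : nat, set (X i -> X i.+1))
  (M : R) (l : Y -> X p.+1 -> R) (hl : forall y a, 0 <= l y a <= M)
  (eps : nat -> R) (heps : forall j : nat, (j <= p)%N -> 0 < eps j) :
  (capC (\sum_(j < p.+1) eps j) (lossc l (fun h => @comp_to X H p.+1 0 h))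
   <= capC (eps p) (lossc l (H p)) *
      \prod_(j < p) capCG l (fun g => @comp_to X H p.+1 j.+1 g) (eps j) (H j))%E.
Proof.
elim: p X H l hl eps heps => [|p IH] X H l hl eps heps.
  by rewrite big_ord1 big_ord0 mule1 comp_to_base.
have IH' := IH (fun n => X n.+1) (fun n => H n.+1) l hl (fun n => eps n.+1)
  (fun j hj => heps j.+1 hj).
have dec : (fun h => @comp_to X H p.+2 0 h) = compc (@comp_to X H p.+2 1) (H 0).
  by apply/funext => h; rewrite comp_to_dec.
rewrite dec big_ord_recl.
apply: le_trans (two_layer _ _ _ _ _) _.
rewrite [(\prod_(j < p.+1) _)%E]big_ord_recl muleCA.
apply: lee_wpmul2l; first by apply: ereal_sup_ubound; right.
have e1 : (fun h => @comp_to (fun n => X n.+1) (fun n => H n.+1) p.+1 0 h) =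
          @comp_to X H p.+2 1.
  by apply/funext => h; rewrite comp_to_shift.
rewrite e1 in IH'.
apply: le_trans IH' _.
apply: lee_wpmul2l; first by apply: ereal_sup_ubound; right.
rewrite le_eqVlt; apply/orP; left; apply/eqP; apply: eq_bigr => j _.
by rewrite -comp_to_shift.
Qed.
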